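(* Let $G$ be a non-abelian finite $p$-group ($p$ prime) possessing an abelian maximal subgroup $M$. Then $$A_G(t)=\frac{1}{|G|}\left(\frac{|Z(G)|}{1-|G|t}+\frac{|G|-|M|}{1-p|Z(G)|t}+\frac{|M|-|Z(G)|}{1-|M|t}\right).$$
   Context: For a finite group $G$ and $n\ge0$, let $\alpha_{G,n}$ be the number of orbits of $G$ acting on $G^n$ by simultaneous conjugation, and $A_G(t)=\sum_{n\ge0}\alpha_{G,n}t^n$, viewed as a rational function of $t$. *)

(* Defs.v *)
From mathcomp Require Import all_boot all_order all_algebra all_fingroup all_solvable.
Set Implicit Arguments. Unset Strict Implicit. Unset Printing Implicit Defensive.

Definition tuples_in (gT : finGroupType) (G : {set gT}) (n : nat)
  : {set {ffun 'I_n -> gT}} :=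
  [set x : {ffun 'I_n -> gT} | [forall i, x i \in G]].

Definition sconj_orbit (gT : finGroupType) (G : {set gT}) (n : nat)
  (x : {ffun 'I_n -> gT}) : {set {ffun 'I_n -> gT}} :=
  [set [ffun i => (x i ^ g)%g] | g in G].

Definition alpha (gT : finGroupType) (G : {set gT}) (n : nat) : nat :=
  #|[set sconj_orbit G x | x in tuples_in G n]|.

(* Coefficient of t^n in the power series expansion (at t = 0) of
   1/|G| * ( |Z|/(1-|G|t) + (|G|-|M|)/(1-p|Z|t) + (|M|-|Z|)/(1-|M|t) ). *)
Local Open Scope ring_scope.
Definition rhs_coef (g m z p : nat) (n : nat) : rat :=
  (g%:R)^-1 * ( z%:R * (g%:R) ^+ n
              + (g%:R - m%:R) * ((p * z)%:R) ^+ n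
              + (m%:R - z%:R) * (m%:R) ^+ n ).

(* Main.v *)
Require Import Defs.
From mathcomp Require Import all_boot all_order all_algebra all_fingroup all_solvable.
Import GRing.Theory.
Local Open Scope group_scope.

Section Act.
Variable gT : finGroupType.
Variable n : nat.
Definition sconj (x : {ffun 'I_n -> gT}) (g : gT) : {ffun 'I_n -> gT} :=
  [ffun i => (x i ^ g)%g].
Lemma sconj1 : sconj^~ 1%g =1 id.
Proof. by move=> x; apply/ffunP=> i; rewrite ffunE conjg1. Qed.
Lemma sconjM x : act_morph sconj x.
Proof. by move=> a b; apply/ffunP=> i; rewrite !ffunE conjgM. Qed.
Definition sconj_act := TotalAction sconj1 sconjM.

Lemma alpha_orbits (G : {group gT}) :
  alpha G n = #|orbit sconj_act G @: tuples_in G n|.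
Proof. by []. Qed.

Lemma acts_tuples (G : {group gT}) : [acts G, on tuples_in G n | sconj_act].
Proof.
apply/actsP => g Gg x /=; rewrite !inE.
apply/forallP/forallP => H i.
  by have := H i; rewrite ffunE groupJr.
by rewrite ffunE groupJr.
Qed.

Lemma card_fix (G : {group gT}) a : a \in G ->
  #|'Fix_(tuples_in G n | sconj_act)[a]| = (#|'C_G[a]| ^ n)%N.
Proof.
move=> Ga.
rewrite -[in RHS](card_ord n) -card_ffun_on; apply: eq_card => x.
rewrite !inE; apply/andP/ffun_onP.
  case=> /forallP Hx Hfix i.
  have Hf : sconj x a = x by move: Hfix; rewrite sub1set inE => /eqP.
  apply/subcent1P; split; first exact: Hx.
  apply: commute_sym; apply/commgP/conjg_fixP.
  by move/ffunP: Hf => /(_ i); rewrite ffunE.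
move=> H; split.
  by apply/forallP=> i; have /subcent1P[] := H i.
rewrite sub1set inE; apply/eqP/ffunP=> i /=; rewrite ffunE.
have /subcent1P[_ c] := H i.
by apply/conjg_fixP/commgP/commute_sym.
Qed.

Lemma burnside (G : {group gT}) :
  (alpha G n * #|G| = \sum_(a in G) #|'C_G[a]| ^ n)%N.
Proof.
rewrite alpha_orbits -Frobenius_Cauchy; last exact: acts_tuples.
by apply: eq_bigr => a Ga; rewrite card_fix.
Qed.
End Act.

Section Main.
Variables (gT : finGroupType) (G M : {group gT}) (p : nat).
Hypotheses (pr : prime p) (pG : p.-group G) (nabG : ~~ abelian G)
  (maxM : maximal M G) (abM : abelian M).

Lemma sMG : M \subset G.
Proof. by case/maxgroupP: maxM => /andP[]. Qed.

Lemma mid (H : {group gT}) : M \subset H -> H \subset G -> H :=: M \/ H :=: G.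
Proof.
move=> sMH sHG; case/maxgroupP: maxM => _ mx.
move: sHG; rewrite subEproper => /predU1P [->|pHG]; first by right.
by left; apply: mx.
Qed.

Lemma ZsubCG : 'Z(G) \subset 'C(G).
Proof. exact: subsetIr. Qed.

Lemma ZsubG : 'Z(G) \subset G.
Proof. exact: subsetIl. Qed.

Lemma ZM : 'Z(G) \subset M.
Proof.
have ZCM : 'Z(G) \subset 'C(M) := subset_trans ZsubCG (centS sMG).
have sJ : M <*> 'Z(G) \subset G by rewrite join_subG sMG ZsubG.
have [E|E] := mid _ (joing_subl M 'Z(G)) sJ.
  by rewrite -E joing_subr.
case/negP: nabG; rewrite -E abelianY abM center_abelian ZCM.
by [].
Qed.

Lemma CZ a : a \in 'Z(G) -> 'C_G[a] = G.
Proof.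
move=> aZ; apply/setIidPl; rewrite sub_cent1.
by apply: (subsetP ZsubCG).
Qed.

Lemma CMZ a : a \in M :\: 'Z(G) -> 'C_G[a] = M.
Proof.
case/setDP=> aM aZ.
have sMC : M \subset 'C_G[a].
  by rewrite subsetI sMG sub_cent1 (subsetP abM).
have [//|E] := mid _ sMC (subsetIl _ _).
case/negP: aZ; rewrite /center inE (subsetP sMG) //= -sub_cent1.
by rewrite -E subsetIr.
Qed.

Lemma cardGM : #|G| = (p * #|M|)%N.
Proof. by rewrite -(Lagrange sMG) (p_maximal_index pG maxM) mulnC. Qed.

Lemma CGM a : a \in G :\: M -> #|'C_G[a]| = (p * #|'Z(G)|)%N.
Proof.
case/setDP=> aG aM.
have aC : a \in 'C_G[a] by rewrite inE aG cent1id.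
have GMa : M <*> <[a]> = G.
  have sMa : M <*> <[a]> \subset G by rewrite join_subG sMG cycle_subG.
  have [E|E] := mid _ (joing_subl _ _) sMa; last by [].
  by case/negP: aM; rewrite -E (subsetP (joing_subr _ _)) // cycle_id.
have CM : M :&: 'C_G[a] = 'Z(G).
  apply/eqP; rewrite eqEsubset; apply/andP; split.
    apply/subsetP => x /setIP [xM /setIP [xG xCa]].
    rewrite /center inE xG /= -GMa centY inE (subsetP abM) //=.
    by rewrite cent_cycle.
  rewrite subsetI ZM subsetI ZsubG sub_cent1.
  have GCZ : G \subset 'C('Z(G)) by rewrite centsC ZsubCG.
  exact: (subsetP GCZ).
have nMG : G \subset 'N(M) := normal_norm (p_maximal_normal pG maxM).
have MC : M <*> 'C_G[a] = G.
  have sMC : M <*> 'C_G[a] \subset G by rewrite join_subG sMG subsetIl.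
  have [E|E] := mid _ (joing_subl _ _) sMC; last by [].
  by case/negP: aM; rewrite -E (subsetP (joing_subr _ _)).
have := mul_cardG M 'C_G[a].
rewrite -norm_joinEr; last exact: subset_trans (subsetIl _ _) nMG.
rewrite MC CM cardGM -mulnA mulnCA => /eqP; rewrite eqn_pmul2l ?cardG_gt0 //.
by move/eqP.
Qed.

Lemma key n : (alpha G n * #|G| = #|'Z(G)| * #|G| ^ n
   + (#|G| - #|M|) * (p * #|'Z(G)|) ^ n + (#|M| - #|'Z(G)|) * #|M| ^ n)%N.
Proof.
rewrite burnside (big_setID M) /= (setIidPr sMG) (big_setID 'Z(G)) /=.
rewrite (setIidPr ZM).
rewrite (eq_bigr (fun _ => #|G| ^ n)%N); last by move=> a aZ; rewrite CZ.
rewrite [X in (_ + X + _)%N = _](eq_bigr (fun _ => #|M| ^ n)%N); last by move=> a aM; rewrite CMZ.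
rewrite [X in (_ + X)%N = _](eq_bigr (fun _ => (p * #|'Z(G)|) ^ n)%N); last by move=> a aM; rewrite CGM.
rewrite !sum_nat_const !cardsD (setIidPr ZM) (setIidPr sMG).
by rewrite addnAC.
Qed.
End Main.
Local Close Scope group_scope.
Local Open Scope ring_scope.

Theorem theorem7p4 (gT : finGroupType) (G M : {group gT}) (p : nat) :
  prime p -> (p.-group G)%g -> ~~ abelian G ->
  maximal M G -> abelian M ->
  forall n : nat,
    (alpha G n)%:R = rhs_coef #|G| #|M| #|'Z(G)%g| p n :> rat.
Proof.
move=> pr pG nab maxM abM n.
have K := @key _ _ _ _ pG nab maxM abM n.

have gnz : (#|G|%:R : rat) != 0 by rewrite Num.Theory.pnatr_eq0 -lt0n cardG_gt0.
rewrite /rhs_coef; apply: (mulfI gnz); rewrite mulrA mulfV // mul1r.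
have le1 : (#|M| <= #|G|)%N := subset_leq_card (@sMG _ _ _ maxM).
have le2 : (#|'Z(G)%g| <= #|M|)%N := subset_leq_card (@ZM _ _ _ nab maxM abM).
rewrite -!natrB // -!natrX -!natrM -!natrD mulnC K.
by [].
Qed.
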